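(* Let $X=X(s)$ be a strictly convex $C^{(3)}$ plane curve, parametrized by arclength, such that for some function $\lambda(s)$ and for all $s$ and all sufficiently small $h_1,h_2$ (with $X(s),X(s+h_1),X(s+h_2)$ distinct) we have $U(s,h_1,h_2)=\lambda(s)T(s,h_1,h_2)$. Fix a point $A\in X$ and choose Cartesian coordinates with $A$ at the origin and the $x$-axis equal to the tangent line of $X$ at $A$, so that near $A$ the curve $X$ is the graph of a non-negative strictly convex $C^{(3)}$ function $f$ with $f(0)=f'(0)=0$ and $f''(0)>0$. Then for all $t$ in some open interval around $0$, $$2f(t)^2f''(t)=f'(t)^2\bigl(tf'(t)-f(t)\bigr).$$
   Context: A simple convex plane curve is strictly convex if it is of class $C^{(3)}$ and has positive curvature with respect to the unit normal pointing to the convex side. For three distinct points $A=X(s)$, $A_i=X(s+h_i)$ ($i=1,2$) on $X$, let $\ell,\ell_1,\ell_2$ be the tangent lines of $X$ at $A,A_1,A_2$, and let $B=\ell_1\cap\ell_2$, $B_1=\ell\cap\ell_1$, $B_2=\ell\cap\ell_2$. Define $T(s,h_1,h_2)=|\triangle AA_1A_2|$ and $U(s,h_1,h_2)=|\triangle BB_1B_2|$ (areas). *)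

(* Defs.v *)
From Stdlib Require Import Reals ZArith.
From Coquelicot Require Import Coquelicot.
Open Scope R_scope.

Definition pt := (R * R)%type.

Definition padd (p q : pt) : pt := (fst p + fst q, snd p + snd q).
Definition psub (p q : pt) : pt := (fst p - fst q, snd p - snd q).
Definition pscal (a : R) (p : pt) : pt := (a * fst p, a * snd p).
Definition det (u v : pt) : R := fst u * snd v - snd u * fst v.

Definition tri_area (P Q S : pt) : R := Rabs (det (psub Q P) (psub S P)) / 2.

(* intersection point of the lines P + R u and Q + R v (meaningful when
   det u v <> 0) *)
Definition line_inter (P u Q v : pt) : pt :=
  padd P (pscal (det (psub Q P) v / det u v) u).

Definition C3 (g : R -> R) : Prop :=
  forall x, ex_derive_n g 1 x /\ ex_derive_n g 2 x /\ ex_derive_n g 3 x /\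
            continuous (Derive_n g 3) x.

Definition C3_on (a b : R) (g : R -> R) : Prop :=
  forall x, a < x < b ->
    ex_derive_n g 1 x /\ ex_derive_n g 2 x /\ ex_derive_n g 3 x /\
    continuous (Derive_n g 3) x.

Definition strictly_convex_fun_on (a b : R) (g : R -> R) : Prop :=
  forall x y l, a < x < b -> a < y < b -> x <> y -> 0 < l < 1 ->
    g (l * x + (1 - l) * y) < l * g x + (1 - l) * g y.

Definition dX (X : R -> pt) (s : R) : pt :=
  (Derive (fun u => fst (X u)) s, Derive (fun u => snd (X u)) s).
Definition ddX (X : R -> pt) (s : R) : pt :=
  (Derive_n (fun u => fst (X u)) 2 s, Derive_n (fun u => snd (X u)) 2 s).

(* signed curvature (for a unit speed curve) *)
Definition curvature (X : R -> pt) (s : R) : R := det (dX X s) (ddX X s).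

Definition C3_curve (X : R -> pt) : Prop :=
  C3 (fun u => fst (X u)) /\ C3 (fun u => snd (X u)).

Definition arclength_param (X : R -> pt) : Prop :=
  forall s, (fst (dX X s)) ^ 2 + (snd (dX X s)) ^ 2 = 1.

(* simple: either an injective (open) curve, or a closed curve given by an
   L-periodic parametrization that is injective on each period *)
Definition simple_curve (X : R -> pt) : Prop :=
  (forall s u, X s = X u -> s = u) \/
  (exists L, 0 < L /\ (forall s, X (s + L) = X s) /\
     (forall s u, X s = X u -> exists k : Z, u = s + IZR k * L)).

(* strictly convex curve: simple, C^3, convex (the whole curve lies on one
   side of each of its tangent lines, the side of the normal sigma*J X'),
   with positive curvature with respect to the normal pointing to the convex
   side (i.e. sigma * signed curvature > 0). *)
Definition strictly_convex_curve (X : R -> pt) : Prop :=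
  C3_curve X /\ simple_curve X /\
  exists sigma : R, (sigma = 1 \/ sigma = -1) /\
    (forall s, 0 < sigma * curvature X s) /\
    (forall s u, 0 <= sigma * det (dX X s) (psub (X u) (X s))).

Definition Tarea (X : R -> pt) (s h1 h2 : R) : R :=
  tri_area (X s) (X (s + h1)) (X (s + h2)).

Definition Uarea (X : R -> pt) (s h1 h2 : R) : R :=
  let A := X s in let A1 := X (s + h1) in let A2 := X (s + h2) in
  let t := dX X s in let t1 := dX X (s + h1) in let t2 := dX X (s + h2) in
  let B := line_inter A1 t1 A2 t2 in
  let B1 := line_inter A t A1 t1 in
  let B2 := line_inter A t A2 t2 in
  tri_area B B1 B2.

(* Cartesian coordinate change: origin at A, axes rotated by theta, and
   possibly reflected (eps = +-1): covers all orthonormal frames *)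
Definition coord (A : pt) (theta eps : R) (p : pt) : pt :=
  let dx := fst p - fst A in let dy := snd p - snd A in
  (cos theta * dx + sin theta * dy, eps * (- sin theta * dx + cos theta * dy)).

(* Main.v *)
Require Import Defs.
From Stdlib Require Import Reals Lra Psatz.
From Coquelicot Require Import Coquelicot.
Open Scope R_scope.

Definition rlim (F : R -> R) (a l : R) := limit1_in F (fun y => y <> a) l a.

Lemma lim_iff F a l : rlim F a l <->
  (forall e, 0 < e -> exists d, 0 < d /\ forall y, y <> a -> Rabs (y - a) < d -> Rabs (F y - l) < e).
Proof.
  unfold rlim, limit1_in, limit_in; simpl; unfold R_dist; split.
  - intros H e He. destruct (H e He) as [d [Hd H']]. exists d; split; auto.
  - intros H e He. destruct (H e He) as [d [Hd H']]. exists d; split; auto.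
    intros x [Hx1 Hx2]; auto.
Qed.

Lemma lim_ext F G a l : (forall y, y <> a -> F y = G y) -> rlim F a l -> rlim G a l.
Proof.
  rewrite !lim_iff. intros E H e He. destruct (H e He) as [d [Hd H']].
  exists d; split; auto. intros y Hy Hy'. rewrite <- E by auto. auto.
Qed.

Lemma lim_unique_loc F G a l1 l2 d0 : 0 < d0 ->
  (forall y, y <> a -> Rabs (y - a) < d0 -> F y = G y) ->
  rlim F a l1 -> rlim G a l2 -> l1 = l2.
Proof.
  rewrite !lim_iff. intros Hd0 E H1 H2.
  destruct (Req_dec l1 l2) as [|Hn]; auto. exfalso.
  assert (He : 0 < Rabs (l1 - l2) / 2) by (apply Rdiv_lt_0_compat; [apply Rabs_pos_lt; lra| lra]).
  destruct (H1 _ He) as [d1 [Hd1 H1']]. destruct (H2 _ He) as [d2 [Hd2 H2']].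
  set (y := a + Rmin d0 (Rmin d1 d2) / 2).
  assert (Hm : 0 < Rmin d0 (Rmin d1 d2)) by (repeat apply Rmin_glb_lt; auto).
  assert (Hya : Rabs (y - a) = Rmin d0 (Rmin d1 d2) / 2).
  { unfold y. replace (a + Rmin d0 (Rmin d1 d2) / 2 - a) with (Rmin d0 (Rmin d1 d2) / 2) by ring.
    apply Rabs_right; lra. }
  assert (Hy : y <> a) by (unfold y; lra).
  pose proof (Rmin_l d0 (Rmin d1 d2)). pose proof (Rmin_r d0 (Rmin d1 d2)).
  pose proof (Rmin_l d1 d2). pose proof (Rmin_r d1 d2).
  assert (A1 : Rabs (y - a) < d1) by lra. assert (A2 : Rabs (y - a) < d2) by lra. assert (A0 : Rabs (y - a) < d0) by lra.
  specialize (H1' y Hy A1). specialize (H2' y Hy A2).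
  rewrite (E y Hy A0) in H1'.
  pose proof (Rabs_triang (G y - l2) (l1 - G y)) as Ht.
  replace (G y - l2 + (l1 - G y)) with (l1 - l2) in Ht by ring.
  rewrite Rabs_minus_sym in H1'. lra.
Qed.

Lemma lim_dq h x l : derivable_pt_lim h x l -> rlim (fun y => (h y - h x) / (y - x)) x l.
Proof.
  intros H. apply lim_iff. intros e He. destruct (H e He) as [d Hd].
  exists d; split. apply cond_pos. intros y Hy Hy'.
  assert (Hne : y - x <> 0) by lra.
  specialize (Hd (y - x) Hne Hy'). replace (x + (y - x)) with y in Hd by ring. exact Hd.
Qed.

Lemma lim_cont h x : continuity_pt h x -> rlim h x (h x).
Proof.
  intros H. apply lim_iff. intros e He. destruct (H e He) as [d [Hd H']].
  exists d; split; auto. intros y Hy Hy'. apply (H' y). split. split; [exact I| auto]. exact Hy'.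
Qed.

Lemma lim_mult F G a l1 l2 : rlim F a l1 -> rlim G a l2 -> rlim (fun y => F y * G y) a (l1 * l2).
Proof. apply limit_mul. Qed.
Lemma lim_minus F G a l1 l2 : rlim F a l1 -> rlim G a l2 -> rlim (fun y => F y - G y) a (l1 - l2).
Proof. apply limit_minus. Qed.
Lemma lim_const c a : rlim (fun _ => c) a c.
Proof. apply lim_iff. intros e He. exists 1. split. lra. intros. rewrite Rminus_eq_0, Rabs_R0. lra. Qed.
Lemma lim_abs F a l : rlim F a l -> rlim (fun y => Rabs (F y)) a (Rabs l).
Proof.
  rewrite !lim_iff. intros H e He. destruct (H e He) as [d [Hd H']]. exists d; split; auto.
  intros y Hy Hy'. specialize (H' y Hy Hy'). pose proof (Rabs_triang_inv2 (F y) l). lra.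
Qed.

Lemma C3_d1 f r x : C3_on (-r) r f -> -r < x < r -> derivable_pt_lim f x (Derive f x).
Proof. intros H Hx. destruct (H x Hx) as [H1 _]. apply is_derive_Reals, Derive_correct; exact H1. Qed.
Lemma C3_d2 f r x : C3_on (-r) r f -> -r < x < r -> derivable_pt_lim (Derive f) x (Derive_n f 2 x).
Proof. intros H Hx. destruct (H x Hx) as [_ [H1 _]]. apply is_derive_Reals, (Derive_correct (Derive f)); exact H1. Qed.
Lemma C3_c2 f r x : C3_on (-r) r f -> -r < x < r -> continuity_pt (Derive_n f 2) x.
Proof.
  intros H Hx. destruct (H x Hx) as [_ [_ [H1 _]]]. apply derivable_continuous_pt.
  exists (Derive (Derive_n f 2) x). apply is_derive_Reals, Derive_correct; exact H1.
Qed.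

Definition Hypf (f : R -> R) (rho : R) := forall x, Rabs x < rho ->
  derivable_pt_lim f x (Derive f x) /\ derivable_pt_lim (Derive f) x (Derive_n f 2 x) /\
  0 < Derive_n f 2 x.

Lemma Hypf_mono f rho a b : Hypf f rho -> Rabs a < rho -> Rabs b < rho -> a < b ->
  Derive f a < Derive f b.
Proof.
  intros H Ha Hb Hab.
  destruct (MVT_cor2 (Derive f) (Derive_n f 2) a b Hab) as [c [Hc1 Hc2]].
  - intros c Hc. apply H. apply Rabs_def1; apply Rabs_def2 in Ha; apply Rabs_def2 in Hb; lra.
  - assert (Rabs c < rho) by (apply Rabs_def1; apply Rabs_def2 in Ha; apply Rabs_def2 in Hb; lra).
    destruct (H c H0) as [_ [_ Hp]]. nra.
Qed.

Lemma Hypf_tang f rho t t' : Hypf f rho -> Rabs t < rho -> Rabs t' < rho -> t <> t' ->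
  f t + Derive f t * (t' - t) < f t'.
Proof.
  intros H Ht Ht' Hn. destruct (Rlt_dec t t') as [Hl|Hl].
  - destruct (MVT_cor2 f (Derive f) t t' Hl) as [c [Hc1 Hc2]].
    + intros c Hc. apply H. apply Rabs_def1; apply Rabs_def2 in Ht; apply Rabs_def2 in Ht'; lra.
    + assert (Rabs c < rho) by (apply Rabs_def1; apply Rabs_def2 in Ht; apply Rabs_def2 in Ht'; lra).
      pose proof (Hypf_mono f rho t c H Ht H0 ltac:(lra)). nra.
  - assert (Hl' : t' < t) by lra.
    destruct (MVT_cor2 f (Derive f) t' t Hl') as [c [Hc1 Hc2]].
    + intros c Hc. apply H. apply Rabs_def1; apply Rabs_def2 in Ht; apply Rabs_def2 in Ht'; lra.
    + assert (Rabs c < rho) by (apply Rabs_def1; apply Rabs_def2 in Ht; apply Rabs_def2 in Ht'; lra).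
      pose proof (Hypf_mono f rho c t H H0 Ht ltac:(lra)). nra.
Qed.

Lemma Hypf_exists f r : 0 < r -> C3_on (-r) r f -> 0 < Derive_n f 2 0 ->
  exists rho, 0 < rho /\ rho <= r /\ Hypf f rho.
Proof.
  intros Hr H H2. assert (H0 : -r < 0 < r) by lra.
  pose proof (C3_c2 f r 0 H H0) as Hc.
  destruct (Hc (Derive_n f 2 0 / 2) ltac:(lra)) as [d [Hd Hd']].
  exists (Rmin d r). split; [apply Rmin_glb_lt; lra|]. split; [apply Rmin_r|].
  intros x Hx. pose proof (Rmin_l d r). pose proof (Rmin_r d r).
  apply Rabs_def2 in Hx.
  assert (Hxr : -r < x < r) by lra.
  split; [apply (C3_d1 f r x H Hxr)|]. split; [apply (C3_d2 f r x H Hxr)|].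
  destruct (Req_dec x 0) as [->|Hx0]; auto.
  assert (Hdist : Rabs (x - 0) < d) by (rewrite Rminus_0_r; apply Rabs_def1; lra).
  specialize (Hd' x (conj (conj I (not_eq_sym Hx0)) Hdist)).
  change (Rabs (Derive_n f 2 x - Derive_n f 2 0) < Derive_n f 2 0 / 2) in Hd'. apply Rabs_def2 in Hd'. lra.
Qed.

Lemma Hypf_d1 f rho x : Hypf f rho -> Rabs x < rho -> ex_derive f x.
Proof. intros H Hx. exists (Derive f x). apply is_derive_Reals. apply H; auto. Qed.
Lemma Hypf_d2 f rho x : Hypf f rho -> Rabs x < rho -> ex_derive (Derive f) x.
Proof. intros H Hx. exists (Derive_n f 2 x). apply is_derive_Reals. apply H; auto. Qed.

Lemma Hypf_facts f rho x : Hypf f rho -> f 0 = 0 -> Derive f 0 = 0 -> Rabs x < rho -> x <> 0 ->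
  0 < f x /\ Derive f x <> 0 /\ 0 < x * Derive f x - f x.
Proof.
  intros H H0 H1 Hx Hx0.
  assert (Hr : 0 < rho) by (pose proof (Rabs_pos x); lra).
  assert (H0r : Rabs 0 < rho) by (rewrite Rabs_R0; lra).
  split; [|split].
  - pose proof (Hypf_tang f rho 0 x H H0r Hx (not_eq_sym Hx0)). rewrite H0, H1 in H2. lra.
  - rewrite <- H1. intro E. destruct (Rlt_dec x 0).
    + pose proof (Hypf_mono f rho x 0 H Hx H0r r). lra.
    + pose proof (Hypf_mono f rho 0 x H H0r Hx ltac:(lra)). lra.
  - pose proof (Hypf_tang f rho x 0 H Hx H0r Hx0). rewrite H0 in H2. lra.
Qed.

Definition gfun f t := (t * Derive f t - f t) / Derive f t.
Definition kfun f x y := ((y - x) * Derive f y - (f y - f x)) / (Derive f y - Derive f x).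

Lemma kfun_bound f rho x y : Hypf f rho -> Rabs x < rho -> Rabs y < rho -> x <> y ->
  Rabs (kfun f x y) <= Rabs (y - x).
Proof.
  intros H Hx Hy Hxy. unfold kfun.
  assert (Hm : forall a b, Rabs a < rho -> Rabs b < rho -> a < b -> Derive f a < Derive f b)
    by (intros; eapply Hypf_mono; eauto).
  assert (Hin : forall c, Rmin x y <= c <= Rmax x y -> Rabs c < rho).
  { intros c Hc. apply Rabs_def2 in Hx. apply Rabs_def2 in Hy. apply Rabs_def1.
    - pose proof (Rmax_lub_lt x y rho ltac:(lra) ltac:(lra)). lra.
    - pose proof (Rmin_glb_lt x y (-rho) ltac:(lra) ltac:(lra)). lra. }
  destruct (Rlt_dec x y) as [Hl|Hl].
  - destruct (MVT_cor2 f (Derive f) x y Hl) as [c [Hc1 Hc2]].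
    { intros c Hc. apply H. apply Hin. rewrite Rmin_left, Rmax_right; lra. }
    assert (Hc : Rabs c < rho) by (apply Hin; rewrite Rmin_left, Rmax_right; lra).
    pose proof (Hm x c Hx Hc ltac:(lra)). pose proof (Hm c y Hc Hy ltac:(lra)).
    rewrite Hc1. replace ((y - x) * Derive f y - Derive f c * (y - x)) with
      ((y - x) * (Derive f y - Derive f c)) by ring.
    unfold Rdiv. rewrite Rabs_mult, Rabs_mult, Rabs_inv.
    rewrite (Rabs_right (y - x)) by lra. rewrite (Rabs_right (Derive f y - Derive f c)) by lra.
    rewrite (Rabs_right (Derive f y - Derive f x)) by lra.
    rewrite Rmult_assoc. rewrite <- (Rmult_1_r (y - x)) at 2. apply Rmult_le_compat_l; [lra|].
    apply (Rmult_le_reg_r (Derive f y - Derive f x)); [lra|].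
    rewrite Rmult_assoc, Rinv_l by lra. lra.
  - assert (Hl' : y < x) by lra.
    destruct (MVT_cor2 f (Derive f) y x Hl') as [c [Hc1 Hc2]].
    { intros c Hc. apply H. apply Hin. rewrite Rmin_right, Rmax_left; lra. }
    assert (Hc : Rabs c < rho) by (apply Hin; rewrite Rmin_right, Rmax_left; lra).
    pose proof (Hm y c Hy Hc ltac:(lra)). pose proof (Hm c x Hc Hx ltac:(lra)).
    replace ((y - x) * Derive f y - (f y - f x)) with ((x - y) * (Derive f c - Derive f y))
      by (rewrite <- (Ropp_minus_distr (f x) (f y)), Hc1; ring).
    unfold Rdiv. rewrite Rabs_mult, Rabs_mult, Rabs_inv.
    rewrite (Rabs_right (x - y)) by lra. rewrite (Rabs_right (Derive f c - Derive f y)) by lra.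
    rewrite (Rabs_left (Derive f y - Derive f x)) by lra.
    rewrite (Rabs_left (y - x)) by lra.
    replace (- (y - x)) with (x - y) by ring.
    rewrite Rmult_assoc. rewrite <- (Rmult_1_r (x - y)) at 2. apply Rmult_le_compat_l; [lra|].
    apply (Rmult_le_reg_r (- (Derive f y - Derive f x))); [lra|].
    rewrite Rmult_assoc, Rinv_l by lra. lra.
Qed.

Definition lin (th e : R) (v : pt) : pt :=
  (cos th * fst v + sin th * snd v, e * (- sin th * fst v + cos th * snd v)).

Lemma coord_lin A th e p : coord A th e p = lin th e (psub p A).
Proof. reflexivity. Qed.

Lemma det_lin th e v w : det (lin th e v) (lin th e w) = e * det v w.
Proof.
  unfold det, lin; simpl.
  transitivity (e * (fst v * snd w - snd v * fst w) * ((sin th)² + (cos th)²)).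
  - unfold Rsqr; ring.
  - rewrite sin2_cos2; ring.
Qed.

Lemma norm_lin th e v : e * e = 1 ->
  fst (lin th e v) ^ 2 + snd (lin th e v) ^ 2 = fst v ^ 2 + snd v ^ 2.
Proof.
  intros He. unfold lin; simpl.
  transitivity ((fst v ^ 2 + snd v ^ 2) * ((sin th)² + (cos th)²) +
     (e * e - 1) * (- sin th * fst v + cos th * snd v) ^ 2).
  - unfold Rsqr; ring.
  - rewrite sin2_cos2, He; ring.
Qed.

Lemma psub_coord A th e p q : psub (coord A th e p) (coord A th e q) = lin th e (psub p q).
Proof. unfold psub, coord, lin; simpl. f_equal; ring. Qed.

Lemma ratio_scale k a b : k <> 0 -> (k * a) / (k * b) = a / b.
Proof.
  intros Hk. destruct (Req_dec b 0) as [->|Hb].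
  - rewrite Rmult_0_r. unfold Rdiv. rewrite Rinv_0. ring.
  - field; auto.
Qed.

Lemma tri_area_coord A th e P Q S : e * e = 1 ->
  tri_area (coord A th e P) (coord A th e Q) (coord A th e S) = tri_area P Q S.
Proof.
  intros He. unfold tri_area. rewrite !psub_coord, det_lin, Rabs_mult.
  assert (Rabs e = 1).
  { destruct (Rle_dec 0 e). rewrite Rabs_right; nra. rewrite Rabs_left; nra. }
  rewrite H; f_equal; ring.
Qed.

Lemma line_inter_coord A th e P u Q v : e * e = 1 ->
  line_inter (coord A th e P) (lin th e u) (coord A th e Q) (lin th e v) =
  coord A th e (line_inter P u Q v).
Proof.
  intros He. unfold line_inter. rewrite psub_coord, !det_lin.
  rewrite ratio_scale by nra.
  set (k := det (psub Q P) v / det u v).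
  unfold padd, pscal, coord, lin; simpl. f_equal; ring.
Qed.

Lemma line_inter_scale P u Q v c c' : c <> 0 -> c' <> 0 ->
  line_inter P (pscal c u) Q (pscal c' v) = line_inter P u Q v.
Proof.
  intros Hc Hc'. unfold line_inter.
  assert (E1 : det (psub Q P) (pscal c' v) = c' * det (psub Q P) v) by (unfold det, pscal; simpl; ring).
  assert (E2 : det (pscal c u) (pscal c' v) = c' * (c * det u v)) by (unfold det, pscal; simpl; ring).
  rewrite E1, E2, ratio_scale by auto.
  destruct (Req_dec (det u v) 0) as [Hd|Hd].
  - rewrite Hd, Rmult_0_r. unfold Rdiv. rewrite !Rinv_0, !Rmult_0_r. unfold padd, pscal; simpl. f_equal; ring.
  - unfold padd, pscal; simpl. f_equal; field; auto.
Qed.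

Lemma area_formula x fx a y fy b : a <> 0 -> b <> 0 -> a <> b ->
  tri_area (line_inter (x, fx) (1, a) (y, fy) (1, b))
           (line_inter (0, 0) (1, 0) (x, fx) (1, a))
           (line_inter (0, 0) (1, 0) (y, fy) (1, b)) =
  Rabs ((fx + ((y - x) * b - (fy - fx)) / (b - a) * a) *
        ((y * b - fy) / b - (x * a - fx) / a)) / 2.
Proof.
  intros Ha Hb Hab. unfold tri_area. f_equal. f_equal.
  unfold det, line_inter, padd, pscal, psub; simpl. unfold det; simpl. field.
  split; auto. split; auto. intro. apply Hab. lra.
Qed.

Lemma tri_formula x fx y fy : tri_area (0, 0) (x, fx) (y, fy) = Rabs (x * fy - fx * y) / 2.
Proof. unfold tri_area, det, psub; simpl. f_equal. f_equal. ring. Qed.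

Lemma L1 f rho lam : Hypf f rho -> f 0 = 0 -> Derive f 0 = 0 ->
  (forall x y, Rabs x < rho -> Rabs y < rho -> x <> 0 -> y <> 0 -> x <> y ->
     lam * Rabs (x * f y - f x * y) =
     Rabs (f x + kfun f x y * Derive f x) * Rabs (gfun f y - gfun f x)) ->
  forall x, Rabs x < rho -> x <> 0 ->
    lam * (x * Derive f x - f x) * (Derive f x)^2 = (f x)^2 * Derive_n f 2 x.
Proof.
  intros H H0 H1 Hrel x Hx Hx0.
  destruct (Hypf_facts f rho x H H0 H1 Hx Hx0) as [Hfx [Hf'x Hxf]].
  assert (Hf''x : 0 < Derive_n f 2 x) by (apply H; auto).
  set (d0 := Rmin (rho - Rabs x) (Rabs x)).
  assert (Hd0 : 0 < d0) by (apply Rmin_glb_lt; [lra| apply Rabs_pos_lt; auto]).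
  assert (Hnb : forall y, Rabs (y - x) < d0 -> Rabs y < rho /\ y <> 0).
  { intros y Hy. pose proof (Rmin_l (rho - Rabs x) (Rabs x)). pose proof (Rmin_r (rho - Rabs x) (Rabs x)).
    fold d0 in H2, H3. pose proof (Rabs_triang (y - x) x). replace (y - x + x) with y in H4 by ring.
    split. lra. intro E. subst y. rewrite Rminus_0_l, Rabs_Ropp in Hy. lra. }
  assert (DPhi : derivable_pt_lim (fun y => x * f y - f x * y) x (x * Derive f x - f x)).
  { apply is_derive_Reals. pose proof (Hypf_d1 f rho x H Hx). auto_derive; auto.
    change (fun x0 : R => f x0) with f. ring. }
  assert (DG : derivable_pt_lim (gfun f) x (f x * Derive_n f 2 x / (Derive f x)^2)).
  { apply is_derive_Reals. pose proof (Hypf_d1 f rho x H Hx). pose proof (Hypf_d2 f rho x H Hx).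
    unfold gfun. auto_derive.
    - change (fun x0 : R => f x0) with f. change (fun x0 : R => Derive f x0) with (Derive f). tauto.
    - change (fun x0 : R => f x0) with f. change (fun x0 : R => Derive f x0) with (Derive f).
      change (Derive_n f 2 x) with (Derive (Derive f) x). field. auto. }
  assert (LK : rlim (fun y => f x + kfun f x y * Derive f x) x (f x)).
  { apply lim_iff. intros e He. exists (Rmin d0 (e / (Rabs (Derive f x) + 1))). split.
    { apply Rmin_glb_lt; auto. apply Rdiv_lt_0_compat; auto. pose proof (Rabs_pos (Derive f x)); lra. }
    intros y Hy Hy'. pose proof (Rmin_l d0 (e / (Rabs (Derive f x) + 1))).
    pose proof (Rmin_r d0 (e / (Rabs (Derive f x) + 1))).
    destruct (Hnb y ltac:(lra)) as [Hy1 Hy2].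
    pose proof (kfun_bound f rho x y H Hx Hy1 (not_eq_sym Hy)).
    replace (f x + kfun f x y * Derive f x - f x) with (kfun f x y * Derive f x) by ring.
    rewrite Rabs_mult. pose proof (Rabs_pos (Derive f x)). pose proof (Rabs_pos (kfun f x y)).
    assert (Rabs (y - x) * (Rabs (Derive f x) + 1) < e).
    { apply (Rmult_lt_reg_r (/ (Rabs (Derive f x) + 1))). apply Rinv_0_lt_compat; lra.
      rewrite Rmult_assoc, Rinv_r by lra. lra. }
    nra. }
  assert (Lim1 : rlim (fun y => lam * Rabs ((x * f y - f x * y - (x * f x - f x * x)) / (y - x))) x
                     (lam * Rabs (x * Derive f x - f x))).
  { apply lim_mult. apply lim_const. apply lim_abs. apply (lim_dq (fun y => x * f y - f x * y)). auto. }
  assert (Lim2 : rlim (fun y => Rabs (f x + kfun f x y * Derive f x) * Rabs ((gfun f y - gfun f x) / (y - x))) x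
                     (Rabs (f x) * Rabs (f x * Derive_n f 2 x / (Derive f x)^2))).
  { apply lim_mult. apply lim_abs; auto. apply lim_abs. apply (lim_dq (gfun f)). auto. }
  assert (Eq : forall y, y <> x -> Rabs (y - x) < d0 ->
     lam * Rabs ((x * f y - f x * y - (x * f x - f x * x)) / (y - x)) =
     Rabs (f x + kfun f x y * Derive f x) * Rabs ((gfun f y - gfun f x) / (y - x))).
  { intros y Hy Hy'. destruct (Hnb y Hy') as [Hy1 Hy2].
    replace (x * f y - f x * y - (x * f x - f x * x)) with (x * f y - f x * y) by ring.
    unfold Rdiv. rewrite !Rabs_mult.
    rewrite <- Rmult_assoc, (Hrel x y Hx Hy1 Hx0 Hy2 (not_eq_sym Hy)). ring. }
  pose proof (lim_unique_loc _ _ x _ _ d0 Hd0 Eq Lim1 Lim2) as E.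
  rewrite (Rabs_right (x * Derive f x - f x)) in E by lra.
  rewrite (Rabs_right (f x)) in E by lra.
  rewrite (Rabs_right (f x * Derive_n f 2 x / Derive f x ^ 2)) in E.
  2: { apply Rle_ge. apply Rlt_le. apply Rdiv_lt_0_compat. nra. apply pow2_gt_0; auto. }
  rewrite E. field. auto.
Qed.

Lemma L2 f r rho lam : C3_on (-r) r f -> 0 < rho -> rho <= r -> Hypf f rho -> f 0 = 0 -> Derive f 0 = 0 ->
  (forall x, Rabs x < rho -> x <> 0 ->
    lam * (x * Derive f x - f x) * (Derive f x)^2 = (f x)^2 * Derive_n f 2 x) ->
  lam = 1/2.
Proof.
  intros HC Hrho Hrr H H0 H1 Hrel.
  set (c := Derive_n f 2 0).
  assert (H0r : Rabs 0 < rho) by (rewrite Rabs_R0; lra).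
  assert (Hc : 0 < c) by (apply H; auto).
  assert (LA : rlim (fun x => Derive f x / x) 0 c).
  { apply (lim_ext (fun y => (Derive f y - Derive f 0) / (y - 0))).
    - intros y Hy. rewrite H1. f_equal; ring.
    - apply lim_dq. apply H; auto. }
  assert (LB : rlim (fun x => f x / x^2) 0 (c/2)).
  { apply lim_iff. intros e He. destruct (proj1 (lim_iff _ _ _) LA e He) as [d [Hd Hd']].
    exists (Rmin d rho). split. apply Rmin_glb_lt; lra.
    intros x Hx Hx'. pose proof (Rmin_l d rho). pose proof (Rmin_r d rho).
    rewrite Rminus_0_r in Hx'.
    set (h := fun t => f t - c / 2 * t^2).
    assert (Dh : forall t, Rmin 0 x <= t <= Rmax 0 x -> derivable_pt_lim h t (Derive f t - c * t)).
    { intros t Ht. assert (Rabs t <= Rabs x).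
      { destruct (Rle_dec 0 x).
        - rewrite Rmin_left, Rmax_right in Ht by lra. rewrite !Rabs_right; lra.
        - rewrite Rmin_right, Rmax_left in Ht by lra. rewrite !Rabs_left1; lra. }
      apply is_derive_Reals. pose proof (Hypf_d1 f rho t H ltac:(lra)). unfold h.
      auto_derive; auto. change (fun x0 : R => f x0) with f. lra. }
    destruct (MVT_abs h (fun t => Derive f t - c * t) 0 x Dh) as [xi [Hxi1 Hxi2]].
    assert (Hxi : Rabs xi <= Rabs x).
    { destruct (Rle_dec 0 x).
      - rewrite Rmin_left, Rmax_right in Hxi2 by lra. rewrite !Rabs_right; lra.
      - rewrite Rmin_right, Rmax_left in Hxi2 by lra. rewrite !Rabs_left1; lra. }
    assert (Hx2 : 0 < x^2) by (apply pow2_gt_0; auto).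
    assert (Hbound : Rabs (h x) < e * x^2).
    { replace (h 0) with 0 in Hxi1 by (unfold h; rewrite H0; ring).
      rewrite Rminus_0_r, Rminus_0_r in Hxi1. rewrite Hxi1.
      destruct (Req_dec xi 0) as [->|Hxi0].
      - rewrite H1. replace (0 - c * 0) with 0 by ring. rewrite Rabs_R0. nra.
      - assert (Rabs (xi - 0) < d) by (rewrite Rminus_0_r; lra).
        specialize (Hd' xi Hxi0 H4).
        replace (Derive f xi - c * xi) with ((Derive f xi / xi - c) * xi) by (field; auto).
        rewrite Rabs_mult. rewrite <- (Rabs_right (x^2)) by lra. rewrite <- RPow_abs.
        pose proof (Rabs_pos (Derive f xi / xi - c)). pose proof (Rabs_pos xi). pose proof (Rabs_pos x).
        simpl. assert (0 < Rabs x) by (apply Rabs_pos_lt; auto). apply Rle_lt_trans with (Rabs (Derive f xi / xi - c) * Rabs x * Rabs x). { apply Rmult_le_compat_r; [lra|]. apply Rmult_le_compat_l; lra. } rewrite Rmult_1_r, <- Rmult_assoc. apply Rmult_lt_compat_r; auto. }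
    replace (f x / x ^ 2 - c / 2) with (h x / x^2) by (unfold h; field; auto).
    unfold Rdiv. rewrite Rabs_mult, Rabs_inv, (Rabs_right (x^2)) by lra.
    apply (Rmult_lt_reg_r (x^2)); auto. rewrite Rmult_assoc, Rinv_l by lra. lra. }
  assert (LC : rlim (Derive_n f 2) 0 c).
  { apply lim_cont. apply (C3_c2 f r 0 HC). lra. }
  assert (L1 : rlim (fun x => lam * (Derive f x / x - f x / x^2) * (Derive f x / x * (Derive f x / x))) 0
                   (lam * (c - c/2) * (c * c))).
  { apply lim_mult. apply lim_mult. apply lim_const. apply lim_minus; auto. apply lim_mult; auto. }
  assert (L2 : rlim (fun x => f x / x^2 * (f x / x^2) * Derive_n f 2 x) 0 (c/2 * (c/2) * c)).
  { apply lim_mult; auto. apply lim_mult; auto. }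
  assert (Eq : forall y, y <> 0 -> Rabs (y - 0) < rho ->
    lam * (Derive f y / y - f y / y^2) * (Derive f y / y * (Derive f y / y)) =
    f y / y^2 * (f y / y^2) * Derive_n f 2 y).
  { intros y Hy Hy'. rewrite Rminus_0_r in Hy'.
    specialize (Hrel y Hy' Hy).
    apply (Rmult_eq_reg_r (y^4)); [| apply pow_nonzero; auto].
    replace ((f y / y ^ 2 * (f y / y ^ 2) * Derive_n f 2 y) * y ^ 4) with ((f y)^2 * Derive_n f 2 y) by (field; auto).
    rewrite <- Hrel; field; auto. }
  pose proof (lim_unique_loc _ _ 0 _ _ rho Hrho Eq L1 L2) as E.
  apply (Rmult_eq_reg_r (c * c * c)). 2: { assert (0 < c*c*c) by (apply Rmult_lt_0_compat; [apply Rmult_lt_0_compat|]; lra). lra. }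
  replace (1/2 * (c*c*c)) with (2 * (c/2 * (c/2) * c)) by field. rewrite <- E. field.
Qed.

Lemma Hypf_sub f a b : Hypf f a -> b <= a -> Hypf f b.
Proof. intros H Hb x Hx. apply H. lra. Qed.

Lemma tangent_min (g : R -> R) a b t l : a < t < b -> derivable_pt_lim g t l ->
  (forall z, a < z < b -> g t <= g z) -> l = 0.
Proof.
  intros Ht Hd Hm. pose (pr := exist (fun l => derivable_pt_lim g t l) l Hd : derivable_pt g t).
  pose proof (deriv_minimum g a b t pr ltac:(lra) ltac:(lra) ltac:(intros; apply Hm; lra)).
  exact H.
Qed.

Theorem lemma7 (X : R -> pt) (lambda : R -> R)
  (HX : strictly_convex_curve X) (Harc : arclength_param X)
  (HUT : forall s, exists delta, 0 < delta /\
     forall h1 h2, Rabs h1 < delta -> Rabs h2 < delta ->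
       X s <> X (s + h1) -> X s <> X (s + h2) -> X (s + h1) <> X (s + h2) ->
       Uarea X s h1 h2 = lambda s * Tarea X s h1 h2)
  (s0 theta eps : R) (Heps : eps = 1 \/ eps = -1)
  (Htan : snd (coord (0, 0) theta eps (dX X s0)) = 0)
  (f : R -> R) (r : R) (Hr : 0 < r)
  (Hgraph : forall t, -r < t < r ->
     exists s, coord (X s0) theta eps (X s) = (t, f t))
  (Hf3 : C3_on (-r) r f) (Hfconv : strictly_convex_fun_on (-r) r f)
  (Hfnn : forall t, -r < t < r -> 0 <= f t)
  (Hf0 : f 0 = 0) (Hf'0 : Derive f 0 = 0) (Hf''0 : 0 < Derive_n f 2 0) :
  exists eps0, 0 < eps0 /\ forall t, Rabs t < eps0 ->
    2 * (f t) ^ 2 * Derive_n f 2 t =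
    (Derive f t) ^ 2 * (t * Derive f t - f t).
Proof.
  destruct HX as [[HC1 HC2] [_ [sigma [Hsig [_ Hside]]]]].
  assert (He2 : eps * eps = 1) by (destruct Heps; subst; ring).
  set (sp := sigma * eps).
  assert (Hsp : sp = 1 \/ sp = -1) by (unfold sp; destruct Heps, Hsig; subst; [left|right|right|left]; ring).
  assert (Hsp2 : sp * sp = 1) by (destruct Hsp; rewrite H; ring).
  set (Y := fun u => coord (X s0) theta eps (X u)).
  set (D := fun u => lin theta eps (dX X u)).
  assert (Hside' : forall s u, 0 <= sp * det (D s) (psub (Y u) (Y s))).
  { intros s u. unfold Y, D. rewrite psub_coord, det_lin.
    replace (sp * (eps * det (dX X s) (psub (X u) (X s)))) with
      (sigma * det (dX X s) (psub (X u) (X s)) * (eps * eps)) by (unfold sp; ring).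
    rewrite He2, Rmult_1_r. apply Hside. }
  assert (HnD : forall s, fst (D s) ^ 2 + snd (D s) ^ 2 = 1).
  { intros s. unfold D. rewrite norm_lin by auto. apply Harc. }
  destruct (Hypf_exists f r Hr Hf3 Hf''0) as [rho1 [Hr1 [Hr1r Hf]]].
  assert (HIr : forall t, Rabs t < rho1 -> -r < t < r) by (intros t Ht; apply Rabs_def2 in Ht; lra).
  assert (HT : forall s t, Rabs t < rho1 -> Y s = (t, f t) ->
             exists c, 0 < sp * c /\ D s = (c, c * Derive f t)).
  { intros s t Ht HYs. destruct (D s) as [c d] eqn:ED.
    assert (Hineq : forall t', Rabs t' < rho1 -> sp * (c * f t - d * t) <= sp * (c * f t' - d * t')).
    { intros t' Ht'. destruct (Hgraph t' (HIr t' Ht')) as [s' Hs'].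
      pose proof (Hside' s s') as Hq. fold (Y s') in Hs'. rewrite ED, Hs', HYs in Hq.
      unfold det, psub in Hq; simpl in Hq. nra. }
    assert (Hd : d = c * Derive f t).
    { assert (Hl : derivable_pt_lim (fun z => sp * (c * f z - d * z)) t (sp * (c * Derive f t - d))).
      { apply is_derive_Reals. pose proof (Hypf_d1 f rho1 t Hf Ht). auto_derive; auto.
        change (fun x0 : R => f x0) with f. ring. }
      pose proof (tangent_min _ (-rho1) rho1 t _ ltac:(apply Rabs_def2 in Ht; lra) Hl
         ltac:(intros z Hz; apply Hineq; apply Rabs_def1; lra)) as H0.
      assert (c * Derive f t - d = 0).
      { rewrite <- (Rmult_1_l (c * Derive f t - d)), <- Hsp2, Rmult_assoc, H0. ring. }
      lra. }
    pose proof (HnD s) as Hn. rewrite ED in Hn; simpl in Hn.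
    assert (Hc0 : c <> 0) by (intro; subst; simpl in Hn; lra).
    set (t' := (t + rho1) / 2).
    assert (Ht' : Rabs t' < rho1) by (unfold t'; apply Rabs_def2 in Ht; apply Rabs_def1; lra).
    assert (Htt : t <> t') by (unfold t'; apply Rabs_def2 in Ht; lra).
    pose proof (Hypf_tang f rho1 t t' Hf Ht Ht' Htt) as Htg.
    pose proof (Hineq t' Ht') as Hi. subst d.
    exists c. split; auto.
    assert (0 <= sp * c * (f t' - (f t + Derive f t * (t' - t)))) by nra.
    assert (0 <= sp * c) by nra.
    destruct (Rle_lt_or_eq_dec _ _ H0); auto. exfalso.
    destruct Hsp; rewrite H1 in e; apply Hc0; lra. }
  assert (HY0 : Y s0 = (0, f 0)).
  { unfold Y, coord. rewrite Hf0. f_equal; ring. }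
  assert (H0r : Rabs 0 < rho1) by (rewrite Rabs_R0; lra).
  destruct (HT s0 0 H0r HY0) as [c0 [Hc0 HD0]].
  set (X1 := fun u => fst (X u)). set (X2 := fun u => snd (X u)).
  set (D1 := fun u => cos theta * Derive X1 u + sin theta * Derive X2 u).
  assert (HD1 : forall u, fst (D u) = D1 u) by reflexivity.
  assert (HX1d : forall u, ex_derive X1 u) by (intros u; apply (HC1 u)).
  assert (HX2d : forall u, ex_derive X2 u) by (intros u; apply (HC2 u)).
  assert (HD1c : continuity_pt D1 s0).
  { unfold D1. apply continuity_pt_plus; apply continuity_pt_mult;
      try (apply continuity_pt_const; intros ? ?; reflexivity);
      apply derivable_continuous_pt.
    - destruct (HC1 s0) as [_ [H2 _]]. exists (Derive (Derive X1) s0).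
      apply is_derive_Reals, Derive_correct; exact H2.
    - destruct (HC2 s0) as [_ [H2 _]]. exists (Derive (Derive X2) s0).
      apply is_derive_Reals, Derive_correct; exact H2. }
  assert (HD1s0 : D1 s0 = c0) by (rewrite <- HD1, HD0; reflexivity).
  destruct (HD1c (sp * c0) Hc0) as [eta [Heta Heta']].
  assert (Hpos : forall u, Rabs (u - s0) < eta -> 0 < sp * D1 u).
  { intros u Hu. destruct (Req_dec u s0) as [->|Hne]. rewrite HD1s0; auto.
    specialize (Heta' u (conj (conj I (not_eq_sym Hne)) Hu)).
    change (Rabs (D1 u - D1 s0) < sp * c0) in Heta'. rewrite HD1s0 in Heta'.
    apply Rabs_def2 in Heta'. destruct Hsp as [E|E]; rewrite E in *; lra. }
  assert (HG : forall u, Rabs (u - s0) < eta -> Rabs (fst (Y u)) < rho1 ->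
                 Y u = (fst (Y u), f (fst (Y u)))).
  { intros u Hu Hp. set (t := fst (Y u)).
    destruct (Hgraph t (HIr t Hp)) as [st Hst]. fold (Y st) in Hst.
    destruct (HT st t Hp Hst) as [c [Hc HDc]].
    pose proof (Hside' st u) as Q1. pose proof (Hside' u st) as Q2.
    pose proof (Hpos u Hu) as Q3. rewrite <- HD1 in Q3.
    rewrite HDc, Hst in Q1. rewrite Hst in Q2.
    destruct (Y u) as [p q] eqn:EY. simpl in t. subst t. simpl.
    destruct (D u) as [a b]. simpl in Q3.
    unfold det, psub in Q1, Q2; simpl in Q1, Q2.
    f_equal.
    replace (sp * (c * (q - f p) - c * Derive f p * (p - p))) with ((sp * c) * (q - f p)) in Q1 by ring.
    replace (sp * (a * (f p - q) - b * (p - p))) with ((sp * a) * (f p - q)) in Q2 by ring.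
    assert (0 <= q - f p) by (apply (Rmult_le_reg_l (sp * c)); lra).
    assert (0 <= f p - q) by (apply (Rmult_le_reg_l (sp * a)); lra).
    lra. }
  set (p := fun u => cos theta * (X1 u - X1 s0) + sin theta * (X2 u - X2 s0)).
  assert (Hp : forall u, fst (Y u) = p u) by reflexivity.
  assert (Hpd : forall u, derivable_pt_lim p u (D1 u)).
  { intros u. apply is_derive_Reals. pose proof (HX1d u). pose proof (HX2d u).
    unfold p, D1. auto_derive; auto. change (fun x0 : R => X1 x0) with X1.
    change (fun x0 : R => X2 x0) with X2. ring. }
  assert (Hpc : continuity p).
  { apply derivable_continuous. intros u. exists (D1 u). apply Hpd. }
  assert (Hp0 : p s0 = 0) by (unfold p; ring).
  destruct (HUT s0) as [dH [HdH HUs]].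
  destruct (Hpd s0 (Rabs c0)) as [dp Hdp].
  { apply Rabs_pos_lt. intro E; rewrite E in Hc0; lra. }
  set (h0 := Rmin dp (Rmin eta dH) / 2).
  assert (Hm : 0 < Rmin dp (Rmin eta dH)) by (repeat apply Rmin_glb_lt; auto; apply cond_pos).
  assert (Hh0 : 0 < h0) by (unfold h0; lra).
  pose proof (Rmin_l dp (Rmin eta dH)). pose proof (Rmin_r dp (Rmin eta dH)).
  pose proof (Rmin_l eta dH). pose proof (Rmin_r eta dH).
  assert (Hh0e : h0 < eta) by (unfold h0; lra).
  assert (Hh0d : h0 < dH) by (unfold h0; lra).
  assert (Hsgn : forall h, h <> 0 -> Rabs h < dp -> 0 < c0 * (p (s0 + h) / h)).
  { intros h Hh Hhd. specialize (Hdp h Hh Hhd). rewrite Hp0, HD1s0, Rminus_0_r in Hdp.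
    set (q := p (s0 + h) / h) in *. 
    assert (c0 <> 0) by (intro E; rewrite E in Hc0; lra).
    destruct (Rlt_dec 0 c0).
    - rewrite (Rabs_right c0) in Hdp by lra. apply Rabs_def2 in Hdp. nra.
    - rewrite (Rabs_left c0) in Hdp by lra. apply Rabs_def2 in Hdp. nra. }
  assert (Hplus : 0 < c0 * p (s0 + h0)).
  { pose proof (Hsgn h0 ltac:(lra) ltac:(rewrite Rabs_right; unfold h0; lra)).
    replace (c0 * p (s0 + h0)) with (c0 * (p (s0 + h0) / h0) * h0) by (field; lra). nra. }
  assert (Hminus : c0 * p (s0 - h0) < 0).
  { pose proof (Hsgn (- h0) ltac:(lra) ltac:(rewrite Rabs_Ropp, Rabs_right; unfold h0; lra)).
    replace (c0 * p (s0 - h0)) with (c0 * (p (s0 + - h0) / - h0) * - h0) by (unfold Rminus; field; lra). nra. }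
  set (rho2 := Rmin rho1 (Rmin (Rabs (p (s0 + h0))) (Rabs (p (s0 - h0))))).
  assert (Hrho2 : 0 < rho2).
  { unfold rho2. repeat apply Rmin_glb_lt; auto; apply Rabs_pos_lt; intro E; rewrite E in *; lra. }
  pose proof (Rmin_l rho1 (Rmin (Rabs (p (s0 + h0))) (Rabs (p (s0 - h0))))) as R1.
  pose proof (Rmin_r rho1 (Rmin (Rabs (p (s0 + h0))) (Rabs (p (s0 - h0))))) as R2.
  pose proof (Rmin_l (Rabs (p (s0 + h0))) (Rabs (p (s0 - h0)))) as R3.
  pose proof (Rmin_r (Rabs (p (s0 + h0))) (Rabs (p (s0 - h0)))) as R4.
  fold rho2 in R1, R2.
  assert (Hpar : forall x, Rabs x < rho2 ->
     exists u, Rabs (u - s0) < eta /\ Rabs (u - s0) < dH /\ Y u = (x, f x)).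
  { intros x Hx.
    assert (Hx1 : Rabs x < Rabs (p (s0 + h0))) by lra.
    assert (Hx2 : Rabs x < Rabs (p (s0 - h0))) by lra.
    assert (Hex : exists u, s0 - h0 <= u <= s0 + h0 /\ p u = x).
    { pose proof (Rle_abs x) as Ra1. pose proof (Rle_abs (- x)) as Ra2. rewrite Rabs_Ropp in Ra2.
      destruct (Rlt_dec 0 c0) as [Hc|Hc].
      - assert (0 < p (s0 + h0)) by nra. assert (p (s0 - h0) < 0) by nra.
        rewrite (Rabs_right (p (s0 + h0))) in Hx1 by lra. rewrite (Rabs_left (p (s0 - h0))) in Hx2 by lra. apply Rabs_def2 in Hx.
        destruct (IVT (fun u => p u - x) (s0 - h0) (s0 + h0)) as [u [Hu1 Hu2]].
        + apply continuity_minus; auto. apply continuity_const. intros ? ?; reflexivity.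
        + lra.
        + cbv beta; lra.
        + cbv beta; lra.
        + exists u. split; auto. cbv beta in Hu2. lra.
      - assert (c0 < 0) by (destruct (Req_dec c0 0) as [E|E]; [rewrite E in Hc0; lra| lra]).
        assert (p (s0 + h0) < 0) by nra. assert (0 < p (s0 - h0)) by nra.
        rewrite (Rabs_left (p (s0 + h0))) in Hx1 by lra. rewrite (Rabs_right (p (s0 - h0))) in Hx2 by lra. apply Rabs_def2 in Hx.
        destruct (IVT (fun u => x - p u) (s0 - h0) (s0 + h0)) as [u [Hu1 Hu2]].
        + apply continuity_minus; auto. apply continuity_const. intros ? ?; reflexivity.
        + lra.
        + cbv beta; lra.
        + cbv beta; lra.
        + exists u. split; auto. cbv beta in Hu2. lra. }
    destruct Hex as [u [Hu Hpu]].
    assert (Hus : Rabs (u - s0) <= h0) by (apply Rabs_le; lra).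
    exists u. split; [lra|]. split; [lra|].
    rewrite (HG u ltac:(lra)); rewrite Hp, Hpu; auto. lra. }
  set (lam := lambda s0).
  assert (Hf2 : Hypf f rho2) by (apply (Hypf_sub f rho1); auto).
  assert (Hrel : forall x y, Rabs x < rho2 -> Rabs y < rho2 -> x <> 0 -> y <> 0 -> x <> y ->
     lam * Rabs (x * f y - f x * y) =
     Rabs (f x + kfun f x y * Derive f x) * Rabs (gfun f y - gfun f x)).
  { intros x y Hx Hy Hx0 Hy0 Hxy.
    destruct (Hpar x Hx) as [ux [Hux1 [Hux2 HYx]]].
    destruct (Hpar y Hy) as [uy [Huy1 [Huy2 HYy]]].
    assert (Hx' : Rabs x < rho1) by lra. assert (Hy' : Rabs y < rho1) by lra.
    destruct (HT ux x Hx' HYx) as [cx [Hcx HDx]].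
    destruct (HT uy y Hy' HYy) as [cy [Hcy HDy]].
    assert (Ncx : cx <> 0) by (intro E; rewrite E, Rmult_0_r in Hcx; lra).
    assert (Ncy : cy <> 0) by (intro E; rewrite E, Rmult_0_r in Hcy; lra).
    assert (Nc0 : c0 <> 0) by (intro E; rewrite E, Rmult_0_r in Hc0; lra).
    assert (HDx' : D ux = pscal cx (1, Derive f x)) by (rewrite HDx; unfold pscal; simpl; f_equal; ring).
    assert (HDy' : D uy = pscal cy (1, Derive f y)) by (rewrite HDy; unfold pscal; simpl; f_equal; ring).
    assert (HD0' : D s0 = pscal c0 (1, 0)) by (rewrite HD0, Hf'0; unfold pscal; simpl; f_equal; ring).
    assert (Ex : s0 + (ux - s0) = ux) by ring.
    assert (Ey : s0 + (uy - s0) = uy) by ring.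
    assert (N1 : X s0 <> X (s0 + (ux - s0))).
    { rewrite Ex. intro E. assert (Y s0 = Y ux) by (unfold Y; rewrite E; reflexivity).
      rewrite HY0, HYx in H3. injection H3; intros; lra. }
    assert (N2 : X s0 <> X (s0 + (uy - s0))).
    { rewrite Ey. intro E. assert (Y s0 = Y uy) by (unfold Y; rewrite E; reflexivity).
      rewrite HY0, HYy in H3. injection H3; intros; lra. }
    assert (N3 : X (s0 + (ux - s0)) <> X (s0 + (uy - s0))).
    { rewrite Ex, Ey. intro E. assert (Y ux = Y uy) by (unfold Y; rewrite E; reflexivity).
      rewrite HYx, HYy in H3. injection H3; intros; lra. }
    pose proof (HUs (ux - s0) (uy - s0) Hux2 Huy2 N1 N2 N3) as HU.
    destruct (Hypf_facts f rho2 x Hf2 Hf0 Hf'0 Hx Hx0) as [_ [Fx _]].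
    destruct (Hypf_facts f rho2 y Hf2 Hf0 Hf'0 Hy Hy0) as [_ [Fy _]].
    assert (Fxy : Derive f x <> Derive f y).
    { destruct (Rlt_dec x y).
      - pose proof (Hypf_mono f rho2 x y Hf2 Hx Hy r0). lra.
      - pose proof (Hypf_mono f rho2 y x Hf2 Hy Hx ltac:(lra)). lra. }
    assert (TT : tri_area (X s0) (X ux) (X uy) = Rabs (x * f y - f x * y) / 2).
    { rewrite <- (tri_area_coord (X s0) theta eps _ _ _ He2). fold (Y s0) (Y ux) (Y uy).
      rewrite HY0, HYx, HYy, Hf0. apply tri_formula. }
    assert (UU : tri_area (line_inter (X ux) (dX X ux) (X uy) (dX X uy))
                          (line_inter (X s0) (dX X s0) (X ux) (dX X ux))
                          (line_inter (X s0) (dX X s0) (X uy) (dX X uy)) =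
                 Rabs ((f x + kfun f x y * Derive f x) * (gfun f y - gfun f x)) / 2).
    { rewrite <- (tri_area_coord (X s0) theta eps _ _ _ He2).
      rewrite <- !line_inter_coord by auto.
      fold (Y s0) (Y ux) (Y uy) (D s0) (D ux) (D uy).
      rewrite HY0, HYx, HYy, HD0', HDx', HDy', !line_inter_scale by auto. rewrite Hf0.
      apply area_formula; auto. }
    unfold Uarea, Tarea in HU. cbv zeta in HU. rewrite Ex, Ey in HU. rewrite UU, TT in HU.
    rewrite Rabs_mult in HU. fold lam in HU. lra. }
  pose proof (L1 f rho2 lam Hf2 Hf0 Hf'0 Hrel) as HL1.
  assert (Hlam : lam = 1/2) by (apply (L2 f r rho2 lam Hf3 Hrho2 ltac:(lra) Hf2 Hf0 Hf'0 HL1)).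
  exists rho2. split; auto. intros t Ht. destruct (Req_dec t 0) as [->|Ht0].
  { rewrite Hf0, Hf'0; ring. }
  pose proof (HL1 t Ht Ht0) as Ef. rewrite Hlam in Ef. rewrite Rmult_assoc, <- Ef. field.
Qed.
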